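(* Let $\lambda$ be a positive integer, $\mu\in\mathbb{R}$, and let $F$, $G$ be smooth functions of $\psi$ on an open interval, with $G$ nonconstant. Consider the function $$I_\lambda=\mathcal{U}^\lambda G(\psi)=\left(p_r+\frac{\mu}{r}\mathcal{X}_L\right)^\lambda G(\psi).$$ Then $I_\lambda$ is a constant of motion of $H=\frac12p_r^2+\frac{1}{r^2}\left(\frac12p_\psi^2+F(\psi)\right)$ (i.e. $\{I_\lambda,H\}=0$, equivalently $\mathcal{X}_H I_\lambda=0$) if and only if $\lambda\mu=1$ and there are constants $k,\psi_0\in\mathbb{R}$ and $A\neq0$ such that $$F(\psi)=\frac{k}{\sin^2(\lambda\psi+\psi_0)},\qquad G(\psi)=A\cos(\lambda\psi+\psi_0)$$ (on the interval, where $\sin(\lambda\psi+\psi_0)\neq0$).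
   Context: Phase space coordinates are $(r,\psi,p_r,p_\psi)$ with $r>0$ and canonical Poisson bracket; dots denote derivatives in $\psi$. $L=\frac12p_\psi^2+F(\psi)$, $\mathcal{X}_L=p_\psi\frac{\partial}{\partial\psi}-\dot F\frac{\partial}{\partial p_\psi}$ is its Hamiltonian vector field, and $\mathcal{X}_H=p_r\frac{\partial}{\partial r}+\frac{2L}{r^3}\frac{\partial}{\partial p_r}+\frac{1}{r^2}\mathcal{X}_L$ is the Hamiltonian vector field of $H$. $\mathcal{U}=p_r+\frac{\mu}{r}\mathcal{X}_L$ is a differential operator ($p_r$ and $\mu/r$ act by multiplication), and $\mathcal{U}^\lambda G$ means applying $\mathcal{U}$ $\lambda$ times to the function $G(\psi)$. *)

(* Defs.v *)
From Stdlib Require Import Reals Lra.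
Open Scope R_scope.

Definition is_open_interval (J : R -> Prop) : Prop :=
  (exists x, J x) /\
  (forall x y z, J x -> J y -> x <= z <= y -> J z) /\
  (forall x, J x -> exists eps, 0 < eps /\ forall y, Rabs (y - x) < eps -> J y).

Definition smooth_on (J : R -> Prop) (f : R -> R) : Prop :=
  exists D : nat -> R -> R, D 0%nat = f /\
    forall n x, J x -> derivable_pt_lim (D n) x (D (S n) x).

(* Phase-space functions of (r, psi, p_r, p_psi). *)
Definition PF := R -> R -> R -> R -> R.

Definition dom (J : R -> Prop) (r psi : R) : Prop := 0 < r /\ J psi.

Definition is_d_r (J : R -> Prop) (f f' : PF) : Prop :=
  forall r psi pr ppsi, dom J r psi ->
    derivable_pt_lim (fun x => f x psi pr ppsi) r (f' r psi pr ppsi).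
Definition is_d_psi (J : R -> Prop) (f f' : PF) : Prop :=
  forall r psi pr ppsi, dom J r psi ->
    derivable_pt_lim (fun x => f r x pr ppsi) psi (f' r psi pr ppsi).
Definition is_d_pr (J : R -> Prop) (f f' : PF) : Prop :=
  forall r psi pr ppsi, dom J r psi ->
    derivable_pt_lim (fun x => f r psi x ppsi) pr (f' r psi pr ppsi).
Definition is_d_ppsi (J : R -> Prop) (f f' : PF) : Prop :=
  forall r psi pr ppsi, dom J r psi ->
    derivable_pt_lim (fun x => f r psi pr x) ppsi (f' r psi pr ppsi).

Definition XL (dF : R -> R) (f_psi f_ppsi : PF) : PF :=
  fun r psi pr ppsi => ppsi * f_psi r psi pr ppsi - dF psi * f_ppsi r psi pr ppsi.

Definition U_iterates (J : R -> Prop) (dF : R -> R) (mu : R) (G : R -> R)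
    (I : nat -> PF) (n : nat) : Prop :=
  (forall r psi pr ppsi, dom J r psi -> I 0%nat r psi pr ppsi = G psi) /\
  forall k, (k < n)%nat ->
    exists Ipsi Ippsi, is_d_psi J (I k) Ipsi /\ is_d_ppsi J (I k) Ippsi /\
      forall r psi pr ppsi, dom J r psi ->
        I (S k) r psi pr ppsi =
          pr * I k r psi pr ppsi + mu / r * XL dF Ipsi Ippsi r psi pr ppsi.

(* f is a constant of motion of H = p_r^2/2 + L/r^2:  X_H f = 0 on the domain,
   X_H = p_r d_r + (2L/r^3) d_{p_r} + (1/r^2) X_L. *)
Definition constant_of_motion (J : R -> Prop) (F dF : R -> R) (f : PF) : Prop :=
  exists fr fpsi fpr fppsi,
    is_d_r J f fr /\ is_d_psi J f fpsi /\ is_d_pr J f fpr /\ is_d_ppsi J f fppsi /\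
    forall r psi pr ppsi, dom J r psi ->
      pr * fr r psi pr ppsi
      + 2 * (/2 * ppsi ^ 2 + F psi) / r ^ 3 * fpr r psi pr ppsi
      + / r ^ 2 * XL dF fpsi fppsi r psi pr ppsi = 0.

(* Main.v *)
Require Import Defs.
From Stdlib Require Import Reals.
From Stdlib Require Import Lra Lia Classical IndefiniteDescription.
Open Scope R_scope.

Lemma D_plus f g x a b : derivable_pt_lim f x a -> derivable_pt_lim g x b ->
  derivable_pt_lim (fun y => f y + g y) x (a + b).
Proof. intros; exact (derivable_pt_lim_plus f g x a b H H0). Qed.
Lemma D_mult f g x a b : derivable_pt_lim f x a -> derivable_pt_lim g x b ->
  derivable_pt_lim (fun y => f y * g y) x (a * g x + f x * b).
Proof. intros; exact (derivable_pt_lim_mult f g x a b H H0). Qed.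
Lemma D_const c x : derivable_pt_lim (fun _ => c) x 0.
Proof. exact (derivable_pt_lim_const c x). Qed.
Lemma D_id x : derivable_pt_lim (fun y => y) x 1.
Proof. exact (derivable_pt_lim_id x). Qed.

Lemma D_local f g x l eps : 0 < eps -> (forall y, Rabs (y - x) < eps -> f y = g y) ->
  derivable_pt_lim f x l -> derivable_pt_lim g x l.
Proof.
  intros He Heq D e Hep. destruct (D e Hep) as [d Hd].
  assert (Hm : 0 < Rmin d eps) by (apply Rmin_pos; [apply cond_pos|lra]).
  exists (mkposreal _ Hm). simpl. intros h Hh0 Hh.
  assert (h1 : Rabs h < d) by (eapply Rlt_le_trans; [exact Hh| apply Rmin_l]).
  assert (h2 : Rabs h < eps) by (eapply Rlt_le_trans; [exact Hh| apply Rmin_r]).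
  rewrite <- !Heq.
  - apply Hd; assumption.
  - replace (x - x) with 0 by ring. rewrite Rabs_R0; lra.
  - replace (x + h - x) with h by ring. exact h2.
Qed.

Lemma D_ext f g x l : (forall y, f y = g y) -> derivable_pt_lim f x l -> derivable_pt_lim g x l.
Proof. intros H. apply (D_local f g x l 1); [lra| intros; apply H]. Qed.

Lemma D_val f x l l' : derivable_pt_lim f x l -> l = l' -> derivable_pt_lim f x l'.
Proof. intros H <-; exact H. Qed.

Lemma D_scal c f x l : derivable_pt_lim f x l -> derivable_pt_lim (fun y => c * f y) x (c * l).
Proof. intros H. eapply D_val; [apply (D_mult (fun _ => c) f x 0 l (D_const c x) H)|ring]. Qed.

(* binomial-like polynomial in x (=p_r) and u (=1/r) *)
Fixpoint Sp (k : nat) (a : nat -> R) (x u : R) : R :=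
  match k with
  | O => a O
  | S k' => x * Sp k' a x u + u * Sp k' (fun b => a (S b)) x u
  end.
Fixpoint Spx (k : nat) (a : nat -> R) (x u : R) : R :=
  match k with
  | O => 0
  | S k' => Sp k' a x u + x * Spx k' a x u + u * Spx k' (fun b => a (S b)) x u
  end.
Fixpoint Spu (k : nat) (a : nat -> R) (x u : R) : R :=
  match k with
  | O => 0
  | S k' => x * Spu k' a x u + Sp k' (fun b => a (S b)) x u + u * Spu k' (fun b => a (S b)) x u
  end.

Lemma Sp_ext k : forall a a' x u, (forall b, (b <= k)%nat -> a b = a' b) ->
  Sp k a x u = Sp k a' x u.
Proof.
  induction k; intros a a' x u H; simpl.
  - apply H; lia.
  - rewrite (IHk a a'), (IHk (fun b => a (S b)) (fun b => a' (S b))); auto;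
    intros; apply H; lia.
Qed.

Lemma Sp_add k : forall a c x u, Sp k (fun b => a b + c b) x u = Sp k a x u + Sp k c x u.
Proof.
  induction k; intros; simpl; auto.
  rewrite (IHk a c), (IHk (fun b => a (S b)) (fun b => c (S b))); ring.
Qed.

Lemma Sp_scal k : forall s a x u, Sp k (fun b => s * a b) x u = s * Sp k a x u.
Proof.
  induction k; intros; simpl; auto.
  rewrite (IHk s a), (IHk s (fun b => a (S b))); ring.
Qed.

Lemma Sp_dy k : forall (A : nat -> R -> R) (A' : nat -> R) y0 x u,
  (forall b, (b <= k)%nat -> derivable_pt_lim (A b) y0 (A' b)) ->
  derivable_pt_lim (fun y => Sp k (fun b => A b y) x u) y0 (Sp k A' x u).
Proof.
  induction k; intros A A' y0 x u H; simpl.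
  - apply H; lia.
  - apply D_plus; apply D_scal.
    + apply IHk; intros; apply H; lia.
    + apply (IHk (fun b => A (S b)) (fun b => A' (S b))); intros; apply H; lia.
Qed.

Lemma Sp_dx k : forall a x0 u, derivable_pt_lim (fun x => Sp k a x u) x0 (Spx k a x0 u).
Proof.
  induction k; intros; simpl.
  - apply D_const.
  - eapply D_val; [apply D_plus; [apply D_mult; [apply D_id|apply IHk]|apply D_scal; apply IHk]|].
    cbv beta; ring.
Qed.

Lemma Sp_du k : forall a x u0, derivable_pt_lim (fun u => Sp k a x u) u0 (Spu k a x u0).
Proof.
  induction k; intros; simpl.
  - apply D_const.
  - eapply D_val; [apply D_plus; [apply D_scal; apply IHk|apply D_mult; [apply D_id|apply IHk]]|].
    cbv beta; ring.
Qed.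

Lemma Sp_Q k : forall a x u L,
  - x * Spu k a x u + 2 * L * u * Spx k a x u =
  INR k * (2 * L * u * Sp (pred k) a x u - x * Sp (pred k) (fun b => a (S b)) x u).
Proof.
  induction k; intros; simpl.
  - ring.
  - replace (- x * (x * Spu k a x u + Sp k (fun b : nat => a (S b)) x u +
        u * Spu k (fun b : nat => a (S b)) x u) +
      2 * L * u * (Sp k a x u + x * Spx k a x u + u * Spx k (fun b : nat => a (S b)) x u))
    with (x * (- x * Spu k a x u + 2 * L * u * Spx k a x u) +
          u * (- x * Spu k (fun b => a (S b)) x u + 2 * L * u * Spx k (fun b => a (S b)) x u)
          + (2 * L * u * Sp k a x u - x * Sp k (fun b => a (S b)) x u)) by ring.
    rewrite IHk, IHk.
    destruct k.
    + simpl. ring.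
    + cbn [pred Sp]. ring.
Qed.

Lemma Sp_at0 k : forall a, Sp k a 1 0 = a O.
Proof. induction k; intros; simpl; auto. rewrite IHk; ring. Qed.

Lemma Spu_at0 k : forall a, Spu k a 1 0 = INR k * a 1%nat.
Proof.
  induction k; intros.
  - simpl; ring.
  - cbn [Spu]. rewrite IHk, Sp_at0, S_INR. ring.
Qed.


Lemma D_inv r0 : r0 <> 0 -> derivable_pt_lim (fun r => / r) r0 (- / r0 ^ 2).
Proof.
  intros H. eapply D_ext; [| eapply D_val; [apply (derivable_pt_lim_div (fun _ => 1) (fun y => y) r0 0 1 (D_const 1 r0) (D_id r0) H)|]].
  - intros y. unfold div_fct. unfold Rdiv. ring.
  - unfold Rsqr. field. exact H.
Qed.

Lemma Sp_dr k a x r0 : r0 <> 0 ->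
  derivable_pt_lim (fun r => Sp k a x (/ r)) r0 (Spu k a x (/ r0) * (- / r0 ^ 2)).
Proof.
  intros H. apply (derivable_pt_lim_comp (fun r => / r) (fun u => Sp k a x u)).
  - apply D_inv; exact H.
  - apply Sp_du.
Qed.

Lemma punct f x c d : 0 < d -> continuity_pt f x ->
  (forall y, y <> x -> Rabs (y - x) < d -> f y = c) -> f x = c.
Proof.
  intros Hd Hc H. destruct (Req_dec (f x) c) as [E|E]; auto. exfalso.
  destruct (Hc (Rabs (f x - c))) as [alp [Ha Hal]].
  { apply Rabs_pos_lt. lra. }
  set (y := x + Rmin alp d / 2).
  assert (Hm : 0 < Rmin alp d) by (apply Rmin_pos; lra).
  assert (Hy1 : Rabs (y - x) < alp).
  { unfold y. replace (x + Rmin alp d / 2 - x) with (Rmin alp d / 2) by ring.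
    rewrite Rabs_right by lra. pose proof (Rmin_l alp d). lra. }
  assert (Hy2 : Rabs (y - x) < d).
  { unfold y. replace (x + Rmin alp d / 2 - x) with (Rmin alp d / 2) by ring.
    rewrite Rabs_right by lra. pose proof (Rmin_r alp d). lra. }
  assert (Hyx : y <> x) by (unfold y; lra).
  specialize (Hal y). simpl in Hal. unfold R_dist in Hal.
  rewrite (H y Hyx Hy2) in Hal.
  assert (Hn : Rabs (c - f x) < Rabs (f x - c)).
  { apply Hal. split; [split; [exact I| auto]| exact Hy1]. }
  rewrite Rabs_minus_sym in Hn. lra.
Qed.

Lemma right_zero f l : derivable_pt_lim f 0 l -> (forall t, 0 < t -> f t = 0) ->
  f 0 = 0 /\ l = 0.
Proof.
  intros D H.
  assert (H0 : f 0 = 0).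
  { assert (Hc : continuity_pt f 0) by (apply derivable_continuous_pt; exists l; exact D).
    destruct (Req_dec (f 0) 0) as [E|E]; auto. exfalso.
    destruct (Hc (Rabs (f 0))) as [alp [Ha Hal]].
    { apply Rabs_pos_lt. lra. }
    specialize (Hal (alp / 2)). simpl in Hal. unfold R_dist in Hal.
    rewrite (H (alp/2)) in Hal by lra.
    assert (Hn : Rabs (0 - f 0) < Rabs (f 0)).
    { apply Hal. split; [split; [exact I| lra]|]. rewrite Rminus_0_r, Rabs_right; lra. }
    rewrite Rabs_minus_sym, Rminus_0_r in Hn. lra. }
  split; auto.
  destruct (Req_dec l 0) as [E|E]; auto. exfalso.
  destruct (D (Rabs l)) as [d Hd]. { apply Rabs_pos_lt. exact E. }
  pose proof (cond_pos d) as Hdp.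
  assert (Hh := Hd (d/2)). rewrite Rplus_0_l, H0, (H (d/2)) in Hh by lra.
  assert (Hn : Rabs ((0 - 0) / (d/2) - l) < Rabs l).
  { apply Hh. lra. rewrite Rabs_right; lra. }
  replace ((0 - 0) / (d/2) - l) with (- l) in Hn by (field; lra).
  rewrite Rabs_Ropp in Hn. lra.
Qed.

Lemma const_J J f f' : is_open_interval J ->
  (forall x, J x -> derivable_pt_lim f x (f' x)) -> (forall x, J x -> f' x = 0) ->
  forall x y, J x -> J y -> f x = f y.
Proof.
  intros [_ [Hconv _]] D Z.
  assert (Hw : forall x y, J x -> J y -> x < y -> f x = f y).
  { intros x y Jx Jy Hxy.
    destruct (MVT_cor2 f f' x y Hxy) as [c [Hc Hcr]].
    - intros c Hc. apply D. apply (Hconv x y c); auto.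
    - rewrite Z in Hc. lra. apply (Hconv x y c); auto; lra. }
  intros x y Jx Jy. destruct (Rtotal_order x y) as [h|[h|h]].
  - auto.
  - subst; auto.
  - symmetry; auto.
Qed.


Lemma rep J dF mu G I lam (hh hp hq : nat -> R -> R -> R) :
  is_open_interval J -> U_iterates J dF mu G I lam ->
  (forall b psi pp, (b < lam)%nat -> J psi ->
     derivable_pt_lim (fun y => hh b y pp) psi (hp b psi pp) /\
     derivable_pt_lim (fun z => hh b psi z) pp (hq b psi pp)) ->
  (forall psi pp, J psi -> hh O psi pp = G psi) ->
  (forall b psi pp, (b < lam)%nat -> J psi ->
     hh (S b) psi pp = mu * (pp * hp b psi pp - dF psi * hq b psi pp)) ->
  forall k, (k <= lam)%nat -> forall r psi pr pp, dom J r psi ->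
    I k r psi pr pp = Sp k (fun b => hh b psi pp) pr (/ r).
Proof.
  intros HJ [U0 US] Hd H0 HS. induction k; intros Hk r psi pr pp Hdom.
  - simpl. rewrite U0 by exact Hdom. symmetry; apply H0, Hdom.
  - assert (Hkl : (k < lam)%nat) by lia.
    destruct (US k Hkl) as [Ipsi [Ippsi [Dpsi [Dppsi Eq]]]].
    rewrite Eq by exact Hdom. unfold XL.
    destruct Hdom as [Hr Jpsi].
    destruct HJ as [_ [_ Hop]]. destruct (Hop psi Jpsi) as [eps [He Heps]].
    assert (E1 : Ipsi r psi pr pp = Sp k (fun b => hp b psi pp) pr (/ r)).
    { apply (uniqueness_limite (fun y => Sp k (fun b => hh b y pp) pr (/ r)) psi).
      - apply (D_local (fun y => I k r y pr pp) _ psi _ eps He).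
        + intros y Hy. apply IHk; [lia| split; auto].
        + apply Dpsi. split; auto.
      - apply (Sp_dy k (fun b y => hh b y pp)). intros b Hb. apply Hd; auto; lia. }
    assert (E2 : Ippsi r psi pr pp = Sp k (fun b => hq b psi pp) pr (/ r)).
    { apply (uniqueness_limite (fun z => Sp k (fun b => hh b psi z) pr (/ r)) pp).
      - apply (D_ext (fun z => I k r psi pr z)).
        + intros z. apply IHk; [lia| split; auto].
        + apply Dppsi. split; auto.
      - apply (Sp_dy k (fun b z => hh b psi z)). intros b Hb. apply Hd; auto; lia. }
    rewrite E1, E2, IHk by (try lia; split; auto).
    cbn [Sp].
    rewrite (Sp_ext k (fun b => hh (S b) psi pp)
               (fun b => (mu * pp) * hp b psi pp + (- (mu * dF psi)) * hq b psi pp)).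
    + rewrite Sp_add, !Sp_scal. field. lra.
    + intros b Hb. rewrite HS by (auto; lia). ring.
Qed.


Lemma XH_expr m a hpv hqv pr r pp Fv dFv : 0 < r ->
  pr * (Spu (S m) a pr (/ r) * (- / r ^ 2))
  + 2 * (/ 2 * pp ^ 2 + Fv) / r ^ 3 * Spx (S m) a pr (/ r)
  + / r ^ 2 * (pp * Sp (S m) hpv pr (/ r) - dFv * Sp (S m) hqv pr (/ r))
  = / r ^ 2 * (Sp (S m) (fun b => pp * hpv b + (- dFv) * hqv b) pr (/ r)
     + INR (S m) * (2 * (/ 2 * pp ^ 2 + Fv) * (/ r) * Sp m a pr (/ r)
                    - pr * Sp m (fun b => a (S b)) pr (/ r))).
Proof.
  intros Hr. rewrite Sp_add, !Sp_scal.
  pose proof (Sp_Q (S m) a pr (/ r) (/ 2 * pp ^ 2 + Fv)) as Q. simpl pred in Q.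
  rewrite <- Q. field. lra.
Qed.

Lemma choiceU J dF mu G I lam : U_iterates J dF mu G I lam ->
  exists f : nat -> PF * PF, forall k, (k < lam)%nat ->
    is_d_psi J (I k) (fst (f k)) /\ is_d_ppsi J (I k) (snd (f k)) /\
    forall r psi pr ppsi, dom J r psi ->
      I (S k) r psi pr ppsi =
        pr * I k r psi pr ppsi + mu / r * XL dF (fst (f k)) (snd (f k)) r psi pr ppsi.
Proof.
  intros [_ US].
  apply (functional_choice (fun k (p : PF * PF) => (k < lam)%nat ->
    is_d_psi J (I k) (fst p) /\ is_d_ppsi J (I k) (snd p) /\
    forall r psi pr ppsi, dom J r psi ->
      I (S k) r psi pr ppsi =
        pr * I k r psi pr ppsi + mu / r * XL dF (fst p) (snd p) r psi pr ppsi)).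
  intros k. destruct (Compare_dec.lt_dec k lam) as [h|h].
  - destruct (US k h) as [A [B HH]]. exists (A, B). intros _. exact HH.
  - exists ((fun _ _ _ _ => 0), (fun _ _ _ _ => 0)). intros h'. contradiction.
Qed.

Lemma only_if_core J lam mu F dF G I (DG : nat -> R -> R) :
  is_open_interval J -> (0 < lam)%nat ->
  DG O = G -> (forall n x, J x -> derivable_pt_lim (DG n) x (DG (S n) x)) ->
  U_iterates J dF mu G I lam -> constant_of_motion J F dF (I lam) ->
  forall psi pp, J psi ->
    (1 - INR lam * mu) * pp * DG 1%nat psi = 0 /\
    (let c1 := mu * (pp ^ 2 * DG 2%nat psi - dF psi * DG 1%nat psi) in
     c1 + (pp ^ 2 + 2 * F psi) * G psi - (INR lam - 1) * mu * c1 = 0).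
Proof.
  intros HJ Hl HDG0 HDG HU Hcm.
  destruct (choiceU _ _ _ _ _ _ HU) as [f Hf].
  destruct Hcm as [fr [fpsi [fpr [fppsi [Dr [Dpsi [Dpr [Dppsi Hid]]]]]]]].
  set (hh := fun b psi pp => I b 1 psi 0 pp).
  set (hp := fun b psi pp => if Nat.ltb b lam then fst (f b) 1 psi 0 pp else fpsi 1 psi 0 pp).
  set (hq := fun b psi pp => if Nat.ltb b lam then snd (f b) 1 psi 0 pp else fppsi 1 psi 0 pp).
  assert (Hder : forall b psi pp, (b <= lam)%nat -> J psi ->
     derivable_pt_lim (fun y => hh b y pp) psi (hp b psi pp) /\
     derivable_pt_lim (fun z => hh b psi z) pp (hq b psi pp)).
  { intros b psi pp Hb Jp. unfold hh, hp, hq.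
    assert (Hd1 : dom J 1 psi) by (split; [lra|exact Jp]).
    destruct (Nat.ltb b lam) eqn:E.
    - apply Nat.ltb_lt in E. destruct (Hf b E) as [A [B _]]. split; [apply A| apply B]; exact Hd1.
    - apply Nat.ltb_ge in E. assert (b = lam) by lia. subst b.
      split; [apply Dpsi| apply Dppsi]; exact Hd1. }
  assert (HS : forall b psi pp, (b < lam)%nat -> J psi ->
     hh (S b) psi pp = mu * (pp * hp b psi pp - dF psi * hq b psi pp)).
  { intros b psi pp Hb Jp. unfold hh, hp, hq.
    assert (E : Nat.ltb b lam = true) by (apply Nat.ltb_lt; exact Hb). rewrite E.
    destruct (Hf b Hb) as [_ [_ C]]. rewrite C by (split; [lra|exact Jp]).
    unfold XL. field. }
  assert (H0 : forall psi pp, J psi -> hh O psi pp = G psi).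
  { intros psi pp Jp. unfold hh. destruct HU as [U0 _]. apply U0. split; [lra|exact Jp]. }
  assert (Hrep := rep J dF mu G I lam hh hp hq HJ HU
     (fun b psi pp Hb Jp => Hder b psi pp (Nat.lt_le_incl _ _ Hb) Jp) H0 HS).
  destruct lam as [|m]; [lia|].
  pose proof HJ as [_ [_ Hop]].
  assert (Fpsi : forall r psi pr pp, dom J r psi ->
     fpsi r psi pr pp = Sp (S m) (fun b => hp b psi pp) pr (/ r)).
  { intros r psi pr pp [Hr Jp]. destruct (Hop psi Jp) as [eps [He Heps]].
    apply (uniqueness_limite (fun y => Sp (S m) (fun b => hh b y pp) pr (/ r)) psi).
    - apply (D_local (fun y => I (S m) r y pr pp) _ psi _ eps He).
      + intros y Hy. apply Hrep; [lia| split; auto].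
      + apply Dpsi. split; auto.
    - apply (Sp_dy (S m) (fun b y => hh b y pp)). intros b Hb. apply Hder; auto. }
  assert (Fppsi : forall r psi pr pp, dom J r psi ->
     fppsi r psi pr pp = Sp (S m) (fun b => hq b psi pp) pr (/ r)).
  { intros r psi pr pp [Hr Jp].
    apply (uniqueness_limite (fun z => Sp (S m) (fun b => hh b psi z) pr (/ r)) pp).
    - apply (D_ext (fun z => I (S m) r psi pr z)).
      + intros z. apply Hrep; [lia| split; auto].
      + apply Dppsi. split; auto.
    - apply (Sp_dy (S m) (fun b z => hh b psi z)). intros b Hb. apply Hder; auto. }
  assert (Fpr : forall r psi pr pp, dom J r psi ->
     fpr r psi pr pp = Spx (S m) (fun b => hh b psi pp) pr (/ r)).
  { intros r psi pr pp [Hr Jp].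
    apply (uniqueness_limite (fun x => Sp (S m) (fun b => hh b psi pp) x (/ r)) pr).
    - apply (D_ext (fun x => I (S m) r psi x pp)).
      + intros x. apply Hrep; [lia| split; auto].
      + apply Dpr. split; auto.
    - apply Sp_dx. }
  assert (Fr : forall r psi pr pp, dom J r psi ->
     fr r psi pr pp = Spu (S m) (fun b => hh b psi pp) pr (/ r) * (- / r ^ 2)).
  { intros r psi pr pp [Hr Jp].
    apply (uniqueness_limite (fun x => Sp (S m) (fun b => hh b psi pp) pr (/ x)) r).
    - apply (D_local (fun x => I (S m) x psi pr pp) _ r _ r Hr).
      + intros y Hy. apply Hrep; [lia| split; auto].
        apply Rabs_def2 in Hy. lra.
      + apply Dr. split; auto.
    - apply Sp_dr. lra. }
  assert (W : forall r psi pr pp, dom J r psi ->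
     Sp (S m) (fun b => pp * hp b psi pp + (- dF psi) * hq b psi pp) pr (/ r)
     + INR (S m) * (2 * (/ 2 * pp ^ 2 + F psi) * (/ r) * Sp m (fun b => hh b psi pp) pr (/ r)
                    - pr * Sp m (fun b => hh (S b) psi pp) pr (/ r)) = 0).
  { intros r psi pr pp Hd. pose proof (Hid r psi pr pp Hd) as H. unfold XL in H.
    rewrite Fr, Fpsi, Fpr, Fppsi in H by exact Hd.
    destruct Hd as [Hr Jp].
    rewrite XH_expr in H by lra.
    apply Rmult_integral in H. destruct H as [H|H]; [|exact H].
    exfalso. assert (0 < / r ^ 2) by (apply Rinv_0_lt_compat; apply pow_lt; lra). lra. }
  intros psi pp Jp.
  set (L := / 2 * pp ^ 2 + F psi).
  set (c := fun b => pp * hp b psi pp + (- dF psi) * hq b psi pp).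
  set (a := fun b => hh b psi pp).
  set (Z := fun t => Sp (S m) c 1 t
       + INR (S m) * (2 * L * t * Sp m a 1 t + (-1) * Sp m (fun b => a (S b)) 1 t)).
  assert (DZ : derivable_pt_lim Z 0
     (Spu (S m) c 1 0 + INR (S m) * ((2 * L * 1) * Sp m a 1 0 + 2 * L * 0 * Spu m a 1 0
        + (-1) * Spu m (fun b => a (S b)) 1 0))).
  { unfold Z. eapply D_val.
    - apply D_plus; [apply Sp_du| apply D_scal; apply D_plus].
      + apply D_mult; [apply D_scal; apply D_id| apply Sp_du].
      + apply D_scal; apply Sp_du.
    - cbv beta. ring. }
  destruct (right_zero Z _ DZ) as [Z0 Z1].
  { intros t Ht. pose proof (W (/ t) psi 1 pp) as Wt.
    rewrite Rinv_inv in Wt. unfold Z. rewrite <- Wt. unfold c, a, L. ring.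
    split; [apply Rinv_0_lt_compat; exact Ht| exact Jp]. }
  unfold Z in Z0. rewrite !Sp_at0 in Z0.
  rewrite !Spu_at0, !Sp_at0 in Z1.
  unfold c, a in Z0, Z1.
  assert (hp0 : forall y z, J y -> hp O y z = DG 1%nat y).
  { intros y z Jy. destruct (Hop y Jy) as [eps [He Heps]].
    apply (uniqueness_limite (fun w => hh O w z) y).
    - apply Hder; [lia|exact Jy].
    - apply (D_local (DG O) _ y _ eps He).
      + intros w Hw. rewrite H0 by (apply Heps; exact Hw). rewrite HDG0; reflexivity.
      + apply HDG; exact Jy. }
  assert (hq0 : forall y z, J y -> hq O y z = 0).
  { intros y z Jy.
    apply (uniqueness_limite (fun w => hh O y w) z).
    - apply Hder; [lia|exact Jy].
    - apply (D_ext (fun _ => G y)); [intros w; rewrite H0 by exact Jy; reflexivity| apply D_const]. }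
  assert (hh1 : forall y z, J y -> hh 1%nat y z = mu * (z * DG 1%nat y)).
  { intros y z Jy. rewrite HS by (auto; lia). rewrite hp0, hq0 by exact Jy. ring. }
  assert (hp1 : hp 1%nat psi pp = mu * (pp * DG 2%nat psi)).
  { destruct (Hop psi Jp) as [eps [He Heps]].
    apply (uniqueness_limite (fun w => hh 1%nat w pp) psi).
    - apply Hder; [lia|exact Jp].
    - apply (D_local (fun w => mu * (pp * DG 1%nat w)) _ psi _ eps He).
      + intros w Hw. rewrite hh1 by (apply Heps; exact Hw). reflexivity.
      + apply D_scal, D_scal, HDG; exact Jp. }
  assert (hq1 : hq 1%nat psi pp = mu * DG 1%nat psi).
  { apply (uniqueness_limite (fun w => hh 1%nat psi w) pp).
    - apply Hder; [lia|exact Jp].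
    - apply (D_ext (fun w => mu * (w * DG 1%nat psi))).
      + intros w. rewrite hh1 by exact Jp. reflexivity.
      + eapply D_val; [apply D_scal, D_mult; [apply D_id| apply D_const]|]. cbv beta; ring. }
  assert (a2 : INR m * hh 2%nat psi pp = INR m * (mu * (pp * hp 1%nat psi pp - dF psi * hq 1%nat psi pp))).
  { destruct m; [simpl; ring|]. rewrite HS by (auto; lia). reflexivity. }
  rewrite hp0, hq0, hh1 in Z0 by exact Jp.
  rewrite hp1, hq1, a2, hp1, hq1 in Z1.
  rewrite HS in Z1 by (auto; lia). rewrite hp0, hq0 in Z1 by exact Jp.
  rewrite H0 in Z1 by exact Jp.
  split.
  - etransitivity; [|exact Z0]. ring.
  - cbv zeta. assert (Hn : INR m + 1 <> 0) by (rewrite <- S_INR; apply not_0_INR; lia).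
    rewrite S_INR in *.
    apply (Rmult_eq_reg_l (INR m + 1)); [| exact Hn]. rewrite Rmult_0_r. etransitivity; [|exact Z1].
    unfold L. field.
Qed.


Lemma D_minus f g x a b : derivable_pt_lim f x a -> derivable_pt_lim g x b ->
  derivable_pt_lim (fun y => f y - g y) x (a - b).
Proof. intros; exact (derivable_pt_lim_minus f g x a b H H0). Qed.

Lemma polar p q : exists A th, A * cos th = p /\ A * sin th = q.
Proof.
  set (A := sqrt (p ^ 2 + q ^ 2)).
  assert (HA : A ^ 2 = p ^ 2 + q ^ 2).
  { unfold A. rewrite <- Rsqr_pow2, Rsqr_sqrt; [ring| nra]. }
  assert (HA0 : 0 <= A) by apply sqrt_pos.
  destruct (Req_dec A 0) as [Z|Z].
  - exists 0, 0. rewrite Z in HA. split; nra.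
  - set (c := p / A).
    assert (Hc : -1 <= c <= 1).
    { unfold c. assert (p ^ 2 <= A ^ 2) by nra.
      assert (0 < A) by lra. split.
      - apply (Rmult_le_reg_r A); [lra|]. unfold Rdiv. rewrite Rmult_assoc, Rinv_l by lra. nra.
      - apply (Rmult_le_reg_r A); [lra|]. unfold Rdiv. rewrite Rmult_assoc, Rinv_l by lra. nra. }
    assert (Hcos : cos (acos c) = c) by (apply cos_acos; exact Hc).
    assert (Hs : 0 <= sin (acos c)) by (apply sin_ge_0; apply acos_bound).
    assert (Hs2 : sin (acos c) ^ 2 = 1 - c ^ 2).
    { pose proof (sin2_cos2 (acos c)). rewrite Hcos in H. unfold Rsqr in H. nra. }
    assert (HAs : (A * sin (acos c)) ^ 2 = q ^ 2).
    { replace ((A * sin (acos c)) ^ 2) with (A ^ 2 * sin (acos c) ^ 2) by ring.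
      rewrite Hs2. unfold c. field_simplify; [|exact Z]. rewrite HA. field. }
    assert (HAs0 : 0 <= A * sin (acos c)) by (apply Rmult_le_pos; lra).
    assert (Hpc : A * c = p) by (unfold c; field; exact Z).
    destruct (Rle_dec 0 q) as [Hq|Hq].
    + exists A, (acos c). split; [rewrite Hcos; exact Hpc|]. nra.
    + exists A, (- acos c). rewrite cos_neg, sin_neg. split; [rewrite Hcos; exact Hpc|]. nra.
Qed.

Lemma D_cos_lin l th x : derivable_pt_lim (fun y => cos (l * y + th)) x (- (l * sin (l * x + th))).
Proof.
  eapply D_val; [apply (derivable_pt_lim_comp (fun y => l * y + th) cos)|].
  - eapply D_val; [apply D_plus; [apply D_scal, D_id| apply D_const]|]. reflexivity.
  - apply derivable_pt_lim_cos.
  - ring.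
Qed.

Lemma D_sin_lin l th x : derivable_pt_lim (fun y => sin (l * y + th)) x (l * cos (l * x + th)).
Proof.
  eapply D_val; [apply (derivable_pt_lim_comp (fun y => l * y + th) sin)|].
  - eapply D_val; [apply D_plus; [apply D_scal, D_id| apply D_const]|]. reflexivity.
  - apply derivable_pt_lim_sin.
  - ring.
Qed.

Lemma ode J G G1 G2 l : is_open_interval J -> 0 < l ->
  (forall x, J x -> derivable_pt_lim G x (G1 x)) ->
  (forall x, J x -> derivable_pt_lim G1 x (G2 x)) ->
  (forall x, J x -> G2 x = - l ^ 2 * G x) ->
  exists A th, forall x, J x -> G x = A * cos (l * x + th) /\ G1 x = - (A * l * sin (l * x + th)).
Proof.
  intros HJ Hl D1 D2 Hode.
  pose proof HJ as [[x1 Jx1] _].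
  destruct (polar (G x1) (- G1 x1 / l)) as [A [th0 [P1 P2]]].
  set (th := th0 - l * x1).
  set (H := fun x => G x - A * cos (l * x + th)).
  set (H1 := fun x => G1 x + A * l * sin (l * x + th)).
  set (E := fun x => H1 x ^ 2 + l ^ 2 * H x ^ 2).
  assert (DH : forall x, J x -> derivable_pt_lim H x (H1 x)).
  { intros x Jx. unfold H, H1. eapply D_val.
    - apply D_minus; [apply D1; exact Jx| apply D_scal; apply D_cos_lin].
    - ring. }
  assert (DH1 : forall x, J x -> derivable_pt_lim H1 x (- l ^ 2 * H x)).
  { intros x Jx. unfold H, H1. eapply D_val.
    - apply D_plus; [apply D2; exact Jx| apply D_scal; apply D_sin_lin].
    - rewrite Hode by exact Jx. ring. }
  assert (DE : forall x, J x -> derivable_pt_lim E x 0).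
  { intros x Jx. unfold E. eapply D_val.
    - apply D_plus.
      + apply (derivable_pt_lim_comp H1 (fun y => y ^ 2)); [apply DH1; exact Jx| apply derivable_pt_lim_pow].
      + apply D_scal. apply (derivable_pt_lim_comp H (fun y => y ^ 2)); [apply DH; exact Jx| apply derivable_pt_lim_pow].
    - simpl. ring. }
  assert (E1 : E x1 = 0).
  { unfold E, H, H1, th. replace (l * x1 + (th0 - l * x1)) with th0 by ring.
    rewrite P1. replace (A * l * sin th0) with (l * (A * sin th0)) by ring. rewrite P2.
    field. lra. }
  exists A, th. intros x Jx.
  assert (Ex : E x = 0).
  { rewrite <- E1. apply (const_J J E (fun _ => 0) HJ); auto. }
  unfold E, H, H1 in Ex.
  assert (Ha : (G1 x + A * l * sin (l * x + th)) * (G1 x + A * l * sin (l * x + th)) = 0).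
  { pose proof (Rle_0_sqr (G1 x + A * l * sin (l * x + th))).
    pose proof (Rle_0_sqr (l * (G x - A * cos (l * x + th)))). unfold Rsqr in *. nra. }
  assert (Hb : (l * (G x - A * cos (l * x + th))) * (l * (G x - A * cos (l * x + th))) = 0).
  { pose proof (Rle_0_sqr (G1 x + A * l * sin (l * x + th))).
    pose proof (Rle_0_sqr (l * (G x - A * cos (l * x + th)))). unfold Rsqr in *. nra. }
  apply Rmult_integral in Ha. apply Rmult_integral in Hb.
  split.
  - destruct Hb as [Hb|Hb]; apply Rmult_integral in Hb; destruct Hb; lra.
  - destruct Ha; lra.
Qed.

Lemma F_part J F dF l A th : is_open_interval J -> 0 < l -> A <> 0 ->
  (forall x, J x -> derivable_pt_lim F x (dF x)) ->
  (forall x, J x -> dF x * (- (A * l * sin (l * x + th))) = 2 * l ^ 2 * F x * (A * cos (l * x + th))) ->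
  exists k, forall x, J x -> sin (l * x + th) <> 0 -> F x = k / sin (l * x + th) ^ 2.
Proof.
  intros HJ Hl HA DF Hr.
  pose proof HJ as [[x1 Jx1] _].
  set (g := fun x => F x * (sin (l * x + th) * sin (l * x + th))).
  assert (Dg : forall x, J x -> derivable_pt_lim g x 0).
  { intros x Jx. unfold g. eapply D_val.
    - apply D_mult; [apply DF; exact Jx| apply D_mult; apply D_sin_lin].
    - cbv beta. assert (E := Hr x Jx).
      assert (E2 : dF x * sin (l * x + th) = - 2 * l * F x * cos (l * x + th)).
      { apply (Rmult_eq_reg_l (- (A * l))). rewrite <- Rmult_assoc.
        replace (- (A * l) * dF x * sin (l * x + th)) with (dF x * - (A * l * sin (l * x + th))) by ring.
        rewrite E. ring. intro h. apply HA. nra. }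
      replace (dF x * (sin (l * x + th) * sin (l * x + th))) with ((dF x * sin (l * x + th)) * sin (l * x + th)) by ring.
      rewrite E2. ring. }
  exists (g x1). intros x Jx Hs.
  rewrite <- (const_J J g (fun _ => 0) HJ Dg (fun _ _ => eq_refl) x x1 Jx Jx1).
  unfold g. field. exact Hs.
Qed.


Lemma forward (J : R -> Prop) (lam : nat) (mu : R) (F dF G : R -> R) (I : nat -> PF) :
  is_open_interval J -> (0 < lam)%nat -> smooth_on J F -> smooth_on J G ->
  (forall x, J x -> derivable_pt_lim F x (dF x)) ->
  (exists x y, J x /\ J y /\ G x <> G y) ->
  U_iterates J dF mu G I lam ->
  constant_of_motion J F dF (I lam) ->
  (INR lam * mu = 1 /\
    exists k psi0 A, A <> 0 /\
      forall psi, J psi ->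
        G psi = A * cos (INR lam * psi + psi0) /\
        (sin (INR lam * psi + psi0) <> 0 ->
           F psi = k / (sin (INR lam * psi + psi0)) ^ 2)).
Proof.
  intros HJ Hl _ [DG [HDG0 HDG]] DF [x0 [y0 [Jx0 [Jy0 Gxy]]]] HU Hcm.
  pose proof (only_if_core J lam mu F dF G I DG HJ Hl HDG0 HDG HU Hcm) as core.
  set (l := INR lam).
  assert (Hlpos : 0 < l) by (apply lt_0_INR; exact Hl).
  assert (D1 : forall x, J x -> derivable_pt_lim G x (DG 1%nat x)).
  { intros x Jx. rewrite <- HDG0. apply HDG; exact Jx. }
  assert (Hlm : l * mu = 1).
  { destruct (classic (exists psi, J psi /\ DG 1%nat psi <> 0)) as [[psi [Jp Hp]]|Hn].
    - destruct (core psi 1 Jp) as [E _].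
      rewrite Rmult_1_r in E. apply Rmult_integral in E. destruct E as [E|E]; [fold l in E; lra| contradiction].
    - exfalso. apply Gxy. apply (const_J J G (DG 1%nat) HJ D1); auto.
      intros x Jx. destruct (Req_dec (DG 1%nat x) 0); auto. exfalso. apply Hn. exists x; auto. }
  assert (Heq : forall psi, J psi -> DG 2%nat psi = - l ^ 2 * G psi /\
                   dF psi * DG 1%nat psi = 2 * l ^ 2 * F psi * G psi).
  { intros psi Jp.
    destruct (core psi 0 Jp) as [_ e0]. destruct (core psi 1 Jp) as [_ e1].
    cbv zeta in e0, e1. fold l in e0, e1.
    assert (K1 : mu * mu * DG 2%nat psi + G psi = 0).
    { transitivity ((mu * (1 ^ 2 * DG 2%nat psi - dF psi * DG 1%nat psi) + (1 ^ 2 + 2 * F psi) * G psi -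
       (l - 1) * mu * (mu * (1 ^ 2 * DG 2%nat psi - dF psi * DG 1%nat psi)))
      - (mu * (0 ^ 2 * DG 2%nat psi - dF psi * DG 1%nat psi) + (0 ^ 2 + 2 * F psi) * G psi -
       (l - 1) * mu * (mu * (0 ^ 2 * DG 2%nat psi - dF psi * DG 1%nat psi)))
      + mu * DG 2%nat psi * (l * mu - 1)).
      - ring.
      - rewrite e0, e1, Hlm. ring. }
    assert (K0 : - mu * mu * dF psi * DG 1%nat psi + 2 * F psi * G psi = 0).
    { transitivity ((mu * (0 ^ 2 * DG 2%nat psi - dF psi * DG 1%nat psi) + (0 ^ 2 + 2 * F psi) * G psi -
       (l - 1) * mu * (mu * (0 ^ 2 * DG 2%nat psi - dF psi * DG 1%nat psi)))
      - mu * dF psi * DG 1%nat psi * (l * mu - 1)).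
      - ring.
      - rewrite e0, Hlm. ring. }
    split.
    - transitivity (l ^ 2 * (mu * mu * DG 2%nat psi + G psi) - l ^ 2 * G psi + DG 2%nat psi * (1 - (l * mu) ^ 2)).
      + ring.
      + rewrite K1, Hlm. ring.
    - transitivity (- l ^ 2 * (- mu * mu * dF psi * DG 1%nat psi + 2 * F psi * G psi) + 2 * l ^ 2 * F psi * G psi
         + dF psi * DG 1%nat psi * (1 - (l * mu) ^ 2)).
      + ring.
      + rewrite K0, Hlm. ring. }
  destruct (ode J G (DG 1%nat) (DG 2%nat) l HJ Hlpos D1 (fun x Jx => HDG 1%nat x Jx)
              (fun x Jx => proj1 (Heq x Jx))) as [A [th HAth]].
  assert (HA : A <> 0).
  { intro HA0. apply Gxy. rewrite (proj1 (HAth x0 Jx0)), (proj1 (HAth y0 Jy0)), HA0. ring. }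
  destruct (F_part J F dF l A th HJ Hlpos HA DF) as [k Hk].
  { intros x Jx. destruct (HAth x Jx) as [E1 E2]. rewrite <- E1, <- E2. apply Heq; exact Jx. }
  split; [exact Hlm|].
  exists k, th, A. split; [exact HA|].
  intros psi Jp. split; [apply HAth; exact Jp| intros Hs; apply Hk; auto].
Qed.


Lemma sin_small_nz t : t <> 0 -> Rabs t < PI -> sin t <> 0.
Proof.
  intros H0 H1. destruct (Rlt_dec 0 t) as [h|h].
  - rewrite Rabs_right in H1 by lra. pose proof (sin_gt_0 t h H1). lra.
  - rewrite Rabs_left in H1 by lra. pose proof (sin_gt_0 (- t)). rewrite sin_neg in H. 
    assert (0 < - sin t) by (apply H; lra). lra.
Qed.

Lemma cont_of_D f x l : derivable_pt_lim f x l -> continuity_pt f x.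
Proof. intros D. apply derivable_continuous_pt. exists l. exact D. Qed.

Lemma key J F dF l th k : is_open_interval J -> 0 < l ->
  (forall x, J x -> derivable_pt_lim F x (dF x)) ->
  (forall x, J x -> sin (l * x + th) <> 0 -> F x = k / sin (l * x + th) ^ 2) ->
  forall x, J x -> dF x * sin (l * x + th) + 2 * l * F x * cos (l * x + th) = 0.
Proof.
  intros HJ Hl DF HF x Jx.
  pose proof HJ as [_ [_ Hop]]. destruct (Hop x Jx) as [e1 [He1 Hsub]].
  set (s := fun y => sin (l * y + th)).
  set (g := fun y => F y * (s y * s y)).
  assert (Dg : derivable_pt_lim g x (dF x * (s x * s x) + F x * (l * cos (l * x + th) * s x + s x * (l * cos (l * x + th))))).
  { unfold g, s. eapply D_val; [apply D_mult; [apply DF; exact Jx| apply D_mult; apply D_sin_lin]|]. cbv beta; ring. }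
  destruct (Req_dec (s x) 0) as [Z|NZ].
  - assert (Hc : cos (l * x + th) <> 0).
    { intro Hc. apply (cos_sin_0 (l * x + th)). split; auto. }
    assert (Hd : 0 < Rmin e1 (PI / l)).
    { apply Rmin_pos; [lra|]. apply Rdiv_lt_0_compat; [apply PI_RGT_0| lra]. }
    assert (Hnz : forall y, y <> x -> Rabs (y - x) < Rmin e1 (PI / l) -> s y <> 0 /\ J y).
    { intros y Hyx Hy. split.
      - unfold s. replace (l * y + th) with ((l * x + th) + l * (y - x)) by ring.
        rewrite sin_plus. fold (s x). rewrite Z, Rmult_0_l, Rplus_0_l.
        intro E. apply Rmult_integral in E. destruct E as [E|E]; [contradiction|].
        revert E. apply sin_small_nz.
        + intro E. apply Rmult_integral in E. destruct E; [lra|]. apply Hyx; lra.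
        + rewrite Rabs_mult, Rabs_right by lra.
          assert (Rabs (y - x) < PI / l) by (eapply Rlt_le_trans; [exact Hy| apply Rmin_r]).
          apply (Rmult_lt_compat_l l) in H; [|lra]. replace (l * (PI / l)) with PI in H by (field; lra). exact H.
      - apply Hsub. eapply Rlt_le_trans; [exact Hy| apply Rmin_l]. }
    assert (Hk : g x = k).
    { apply (punct g x k _ Hd (cont_of_D _ _ _ Dg)).
      intros y Hyx Hy. destruct (Hnz y Hyx Hy) as [Hs Jy]. unfold g.
      rewrite HF by auto. fold (s y). field. exact Hs. }
    assert (k0 : k = 0) by (rewrite <- Hk; unfold g; rewrite Z; ring).
    assert (Fx : F x = 0).
    { apply (punct F x 0 _ Hd (cont_of_D _ _ _ (DF x Jx))).
      intros y Hyx Hy. destruct (Hnz y Hyx Hy) as [Hs Jy].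
      rewrite HF by auto. rewrite k0. unfold Rdiv; ring. }
    fold (s x). rewrite Z, Fx. ring.
  - destruct (cont_of_D _ _ _ (D_sin_lin l th x) (Rabs (s x))) as [alp [Ha Hal]].
    { apply Rabs_pos_lt; exact NZ. }
    assert (Hd : 0 < Rmin e1 alp) by (apply Rmin_pos; lra).
    assert (Hloc : forall y, Rabs (y - x) < Rmin e1 alp -> k = g y).
    { intros y Hy.
      assert (Jy : J y) by (apply Hsub; eapply Rlt_le_trans; [exact Hy| apply Rmin_l]).
      assert (Sy : s y <> 0).
      { destruct (Req_dec y x) as [E|E]; [subst; exact NZ|].
        assert (Hl2 : Rabs (sin (l * y + th) - sin (l * x + th)) < Rabs (s x)).
        { apply (Hal y). split; [split; [exact I| auto]|].
          simpl. unfold R_dist. eapply Rlt_le_trans; [exact Hy| apply Rmin_r]. }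
        fold (s y) (s x) in Hl2. intro E0. rewrite E0, Rminus_0_l, Rabs_Ropp in Hl2. lra. }
      unfold g. rewrite HF by auto. fold (s y). field. exact Sy. }
    assert (D0 := D_local (fun _ => k) g x 0 _ Hd Hloc (D_const k x)).
    pose proof (uniqueness_limite g x _ _ Dg D0) as U.
    fold (s x) in U.
    apply (Rmult_eq_reg_l (s x)); [| exact NZ].
    rewrite Rmult_0_r. rewrite <- U. unfold s. ring.
Qed.


Fixpoint hhB (A l th mu : R) (F : R -> R) (b : nat) (psi pp : R) : R :=
  match b with
  | O => A * cos (l * psi + th)
  | S O => mu * pp * (- (A * l * sin (l * psi + th)))
  | S (S b') => - (pp ^ 2 + 2 * F psi) * hhB A l th mu F b' psi pp
  end.
Fixpoint hpB (A l th mu : R) (F dF : R -> R) (b : nat) (psi pp : R) : R :=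
  match b with
  | O => - (A * l * sin (l * psi + th))
  | S O => mu * pp * (- (A * l * (l * cos (l * psi + th))))
  | S (S b') => - (2 * dF psi) * hhB A l th mu F b' psi pp
                - (pp ^ 2 + 2 * F psi) * hpB A l th mu F dF b' psi pp
  end.
Fixpoint hqB (A l th mu : R) (F : R -> R) (b : nat) (psi pp : R) : R :=
  match b with
  | O => 0
  | S O => mu * (- (A * l * sin (l * psi + th)))
  | S (S b') => - (2 * pp) * hhB A l th mu F b' psi pp
                - (pp ^ 2 + 2 * F psi) * hqB A l th mu F b' psi pp
  end.

Lemma hB_der J A l th mu F dF :
  (forall x, J x -> derivable_pt_lim F x (dF x)) ->
  forall b psi pp, J psi ->
    derivable_pt_lim (fun y => hhB A l th mu F b y pp) psi (hpB A l th mu F dF b psi pp) /\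
    derivable_pt_lim (fun z => hhB A l th mu F b psi z) pp (hqB A l th mu F b psi pp).
Proof.
  intros DF.
  assert (H : forall b, (forall psi pp, J psi ->
    derivable_pt_lim (fun y => hhB A l th mu F b y pp) psi (hpB A l th mu F dF b psi pp) /\
    derivable_pt_lim (fun z => hhB A l th mu F b psi z) pp (hqB A l th mu F b psi pp)) /\
    (forall psi pp, J psi ->
    derivable_pt_lim (fun y => hhB A l th mu F (S b) y pp) psi (hpB A l th mu F dF (S b) psi pp) /\
    derivable_pt_lim (fun z => hhB A l th mu F (S b) psi z) pp (hqB A l th mu F (S b) psi pp))).
  { induction b as [|b [IH1 IH2]].
    - split; intros psi pp Jp; split; simpl.
      + eapply D_val; [apply D_scal, D_cos_lin|]. ring.
      + apply D_const.
      + apply (D_ext (fun y => (mu * pp * (- (A * l))) * sin (l * y + th))); [intros; ring|].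
        eapply D_val; [apply D_scal, D_sin_lin|]. ring.
      + apply (D_ext (fun z => (mu * (- (A * l * sin (l * psi + th)))) * z)); [intros; ring|].
        eapply D_val; [apply D_scal, D_id|]. ring.
    - split; [exact IH2|]. intros psi pp Jp.
      destruct (IH1 psi pp Jp) as [Da Db]. split; cbn [hhB hpB hqB].
      + eapply D_val; [apply D_mult; [|exact Da]|].
        * apply (D_ext (fun y => (-2) * F y + (- pp ^ 2))); [intros; ring|].
          eapply D_val; [apply D_plus; [apply D_scal, DF; exact Jp| apply D_const]|]. reflexivity.
        * cbv beta; ring.
      + eapply D_val; [apply D_mult; [|exact Db]|].
        * apply (D_ext (fun z => (-1) * (z * z) + (- (2 * F psi)))); [intros; ring|].
          eapply D_val; [apply D_plus; [apply D_scal, D_mult; apply D_id| apply D_const]|]. reflexivity.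
        * cbv beta; ring. }
  intros b. apply (proj1 (H b)).
Qed.

Lemma hB_rel J A l th mu F dF : 0 < l -> l * mu = 1 ->
  (forall x, J x -> dF x * sin (l * x + th) + 2 * l * F x * cos (l * x + th) = 0) ->
  forall b psi pp, J psi ->
    pp * hpB A l th mu F dF b psi pp - dF psi * hqB A l th mu F b psi pp =
    l * hhB A l th mu F (S b) psi pp.
Proof.
  intros Hl Hlm Hk.
  assert (Hmu : mu = / l) by (apply (Rmult_eq_reg_l l); [rewrite Hlm; field|]; lra).
  assert (H : forall b, (forall psi pp, J psi ->
    pp * hpB A l th mu F dF b psi pp - dF psi * hqB A l th mu F b psi pp =
    l * hhB A l th mu F (S b) psi pp) /\ (forall psi pp, J psi ->
    pp * hpB A l th mu F dF (S b) psi pp - dF psi * hqB A l th mu F (S b) psi pp =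
    l * hhB A l th mu F (S (S b)) psi pp)).
  { induction b as [|b [IH1 IH2]].
    - split; intros psi pp Jp; cbn [hhB hpB hqB]; rewrite Hmu.
      + field. lra.
      + assert (K := Hk psi Jp).
        apply (Rplus_eq_reg_r (- (l * (- (pp ^ 2 + 2 * F psi) * (A * cos (l * psi + th)))))).
        rewrite Rplus_opp_r.
        transitivity (A * (dF psi * sin (l * psi + th) + 2 * l * F psi * cos (l * psi + th))).
        * field. lra.
        * rewrite K. ring.
    - split; [exact IH2|]. intros psi pp Jp.
      change (hhB A l th mu F (S (S (S b))) psi pp) with
        (- (pp ^ 2 + 2 * F psi) * hhB A l th mu F (S b) psi pp).
      cbn [hpB hqB].
      transitivity (- (pp ^ 2 + 2 * F psi) *
         (pp * hpB A l th mu F dF b psi pp - dF psi * hqB A l th mu F b psi pp)); [ring|].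
      rewrite IH1 by exact Jp. ring. }
  intros b. apply (proj1 (H b)).
Qed.


Lemma backward (J : R -> Prop) (lam : nat) (mu : R) (F dF G : R -> R) (I : nat -> PF) :
  is_open_interval J -> (0 < lam)%nat ->
  (forall x, J x -> derivable_pt_lim F x (dF x)) ->
  U_iterates J dF mu G I lam ->
  (INR lam * mu = 1 /\
    exists k psi0 A, A <> 0 /\
      forall psi, J psi ->
        G psi = A * cos (INR lam * psi + psi0) /\
        (sin (INR lam * psi + psi0) <> 0 ->
           F psi = k / (sin (INR lam * psi + psi0)) ^ 2)) ->
  constant_of_motion J F dF (I lam).
Proof.
  intros HJ Hl DF HU [Hlm [k [th [A [HA Hrep]]]]].
  set (l := INR lam) in *.
  assert (Hlpos : 0 < l) by (apply lt_0_INR; exact Hl).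
  assert (Hkey := key J F dF l th k HJ Hlpos DF (fun x Jx => proj2 (Hrep x Jx))).
  set (hh := hhB A l th mu F). set (hp := hpB A l th mu F dF). set (hq := hqB A l th mu F).
  assert (Hder := hB_der J A l th mu F dF DF).
  assert (Hrel := hB_rel J A l th mu F dF Hlpos Hlm Hkey).
  assert (HI : forall k, (k <= lam)%nat -> forall r psi pr pp, dom J r psi ->
    I k r psi pr pp = Sp k (fun b => hh b psi pp) pr (/ r)).
  { apply (rep J dF mu G I lam hh hp hq HJ HU).
    - intros b psi pp _ Jp. apply Hder; exact Jp.
    - intros psi pp Jp. symmetry. apply Hrep. exact Jp.
    - intros b psi pp _ Jp. unfold hp, hq. rewrite Hrel by exact Jp.
      transitivity ((l * mu) * hh (S b) psi pp); [rewrite Hlm; ring| unfold hh; ring]. }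
  pose proof HJ as [_ [_ Hop]].
  exists (fun r psi pr pp => Spu lam (fun b => hh b psi pp) pr (/ r) * (- / r ^ 2)),
         (fun r psi pr pp => Sp lam (fun b => hp b psi pp) pr (/ r)),
         (fun r psi pr pp => Spx lam (fun b => hh b psi pp) pr (/ r)),
         (fun r psi pr pp => Sp lam (fun b => hq b psi pp) pr (/ r)).
  split; [|split; [|split; [|split]]].
  - intros r psi pr pp [Hr Jp].
    apply (D_local (fun x => Sp lam (fun b => hh b psi pp) pr (/ x)) _ r _ r Hr).
    + intros y Hy. symmetry. apply HI; [lia| split; auto]. apply Rabs_def2 in Hy. lra.
    + apply Sp_dr. lra.
  - intros r psi pr pp [Hr Jp]. destruct (Hop psi Jp) as [eps [He Heps]].
    apply (D_local (fun y => Sp lam (fun b => hh b y pp) pr (/ r)) _ psi _ eps He).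
    + intros y Hy. symmetry. apply HI; [lia| split; auto].
    + apply (Sp_dy lam (fun b y => hh b y pp)). intros b _. apply Hder; exact Jp.
  - intros r psi pr pp [Hr Jp].
    apply (D_ext (fun x => Sp lam (fun b => hh b psi pp) x (/ r))).
    + intros x. symmetry. apply HI; [lia| split; auto].
    + apply Sp_dx.
  - intros r psi pr pp [Hr Jp].
    apply (D_ext (fun z => Sp lam (fun b => hh b psi z) pr (/ r))).
    + intros z. symmetry. apply HI; [lia| split; auto].
    + apply (Sp_dy lam (fun b z => hh b psi z)). intros b _. apply Hder; exact Jp.
  - intros r psi pr pp [Hr Jp]. unfold XL.
    destruct lam as [|m]; [lia|].
    rewrite XH_expr by lra.
    rewrite (Sp_ext (S m) _ (fun b => l * hh (S b) psi pp)).
    2: { intros b _. unfold hp, hq. rewrite <- Hrel by exact Jp. ring. }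
    rewrite Sp_scal. cbn [Sp].
    rewrite (Sp_ext m (fun b => hh (S (S b)) psi pp) (fun b => (- (pp ^ 2 + 2 * F psi)) * hh b psi pp))
      by (intros; reflexivity).
    rewrite Sp_scal. fold l. field. lra.
Qed.


Theorem theorem1 (J : R -> Prop) (lam : nat) (mu : R) (F dF G : R -> R)
    (I : nat -> PF) :
  is_open_interval J ->
  (0 < lam)%nat ->
  smooth_on J F ->
  smooth_on J G ->
  (forall x, J x -> derivable_pt_lim F x (dF x)) ->
  (exists x y, J x /\ J y /\ G x <> G y) ->
  U_iterates J dF mu G I lam ->
  (constant_of_motion J F dF (I lam) <->
   (INR lam * mu = 1 /\
    exists k psi0 A, A <> 0 /\
      forall psi, J psi ->
        G psi = A * cos (INR lam * psi + psi0) /\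
        (sin (INR lam * psi + psi0) <> 0 ->
           F psi = k / (sin (INR lam * psi + psi0)) ^ 2))).
Proof.
  intros HJ Hl HF HG DF Hnc HU. split.
  - intros Hc. apply (forward J lam mu F dF G I); assumption.
  - intros Hc. apply (backward J lam mu F dF G I); assumption.
Qed.
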